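(* For all nonnegative integers $L,M$, \[ \sum_{j\in\mathbb{Z}}(-1)^j q^{\frac{1}{2}j(5j+3)} \begin{bmatrix}L+M+j\\ M-j-1\end{bmatrix}\begin{bmatrix}L+M-j\\ M+j\end{bmatrix} =\sum_{n\geq 0}q^{n(n+1)}\begin{bmatrix}2L+M-n\\ 2L+1\end{bmatrix}\begin{bmatrix}L\\ n\end{bmatrix}. \]
   Context: $(x;q)_n=\prod_{i=0}^{n-1}(1-xq^i)$, $(q)_n=(q;q)_n$. The $q$-binomial coefficient is $\begin{bmatrix}n\\ m\end{bmatrix}=\frac{(q)_n}{(q)_m(q)_{n-m}}$ if $m$ and $n-m$ are nonnegative integers and $0$ otherwise. *)

(* Defs.v *)
(* q is a formal variable: we work in the field of rational
   functions Q(q) = {fraction {poly rat}}, with q := 'X. *)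
From HB Require Import structures.
From mathcomp Require Import all_boot all_order all_algebra fraction.
Set Implicit Arguments. Unset Strict Implicit. Unset Printing Implicit Defensive.
Import Order.TTheory GRing.Theory Num.Theory.
Local Open Scope ring_scope.

Notation RF := {fraction {poly rat}}.

Definition qF : RF := tofrac ('X : {poly rat}).

Definition qpoch (x : RF) (n : nat) : RF := \prod_(i < n) (1 - x * qF ^+ i).

Definition qfac (n : nat) : RF := qpoch qF n.

Definition qbinom (n m : int) : RF :=
  if (0 <= m) && (0 <= n - m)
  then qfac `|n|%N / (qfac `|m|%N * qfac `|n - m|%N)
  else 0.

(* Main.v *)
Require Import Defs.
From HB Require Import structures.
From mathcomp Require Import all_boot all_order all_algebra fraction.
From mathcomp Require Import ring zify.
Import Order.TTheory GRing.Theory Num.Theory.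
Local Open Scope ring_scope.

Lemma qF_neq0 : qF != 0.
Proof. by rewrite /qF tofrac_eq0 polyX_eq0. Qed.

Lemma one_sub_qpow_neq0 (k : nat) : (0 < k)%N -> 1 - qF ^+ k != 0.
Proof.
move=> k0; rewrite /qF -tofracXn -tofrac1 -tofracB tofrac_eq0.
apply/negP => /eqP h.
have := congr1 (fun p : {poly rat} => p.[0]) h.
rewrite /= !hornerE expr0n eqn0Ngt k0 /= subr0 => /eqP.
by rewrite oner_eq0.
Qed.




Definition gfac {F : fieldType} (q : F) (n : nat) : F := \prod_(i < n) (1 - q * q ^+ i).
Definition gbin {F : fieldType} (q : F) (n m : int) : F :=
  if (0 <= m) && (0 <= n - m)
  then gfac q `|n|%N / (gfac q `|m|%N * gfac q `|n - m|%N)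
  else 0.
Definition qgood {F : fieldType} (q : F) :=
  (q != 0) /\ (forall k : nat, (0 < k)%N -> 1 - q ^+ k != 0).


Lemma gfacS {F : fieldType} (q : F) n : gfac q n.+1 = gfac q n * (1 - q ^+ n.+1).
Proof. by rewrite /gfac big_ord_recr exprS. Qed.

Lemma gfac0 {F : fieldType} (q : F) : gfac q 0 = 1.
Proof. by rewrite /gfac big_ord0. Qed.

Lemma gfac_neq0 {F : fieldType} (q : F) n : qgood q -> gfac q n != 0.
Proof.
move=> [_ hq]; elim: n => [|n IH]; first by rewrite gfac0 oner_eq0.
by rewrite gfacS mulf_neq0 // hq.
Qed.

Lemma gbin_nat {F : fieldType} (q : F) (x y : int) (a b : nat) :
  x = (a + b)%N%:Z -> y = a%:Z ->
  gbin q x y = gfac q (a + b) / (gfac q a * gfac q b).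
Proof.
move=> -> ->; rewrite /gbin.
have -> : (a + b)%N%:Z - a%:Z = b%:Z by rewrite PoszD addrC addKr.
by rewrite !le0z_nat.
Qed.

Lemma gbin_out {F : fieldType} (q : F) (x y : int) : (y < 0) || (x < y) -> gbin q x y = 0.
Proof.
move=> h; rewrite /gbin; case: ifP => [/andP [h1 h2]|//].
exfalso; move: h h1 h2; lia.
Qed.

Lemma int_split (m n : int) : 0 <= m -> m <= n ->
  exists a b : nat, m = a%:Z /\ n = (a + b)%N%:Z.
Proof.
move=> h1 h2; exists `|m|%N, `|n - m|%N; split; lia.
Qed.

Lemma pascal_a {F : fieldType} (q : F) (n m : int) : qgood q -> (n != 0) || (m != 0) ->
  gbin q n m = gbin q (n - 1) (m - 1) + q ^ m * gbin q (n - 1) m.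
Proof.
move=> hq nz.
case: (ltP m 0) => hm0.
  by rewrite !gbin_out ?mulr0 ?addr0 //; lia.
case: (ltP n m) => hnm.
  by rewrite !gbin_out ?mulr0 ?addr0 //; lia.
have [a [b [ea eb]]] := @int_split m n hm0 hnm; subst m n.
case: a nz hm0 hnm => [|a] nz hm0 hnm.
  rewrite (@gbin_out _ q _ (-1)) //.
  case: b nz hm0 hnm => [|b] nz hm0 hnm; first by case/orP: nz.
  rewrite (@gbin_nat _ q _ _ 0 b.+1) // (@gbin_nat _ q _ _ 0 b); try lia.
  by rewrite !add0n gfac0 expr0z !mul1r add0r !divff // ?gfac_neq0.
case: b nz hm0 hnm => [|b] nz hm0 hnm.
  rewrite (@gbin_nat _ q _ _ a.+1 0) // (@gbin_nat _ q _ _ a 0); try lia.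
  rewrite (@gbin_out _ q _ (a.+1%:Z)); last lia.
  by rewrite !addn0 gfac0 !mulr1 mulr0 addr0 !divff // ?gfac_neq0.
rewrite (@gbin_nat _ q _ _ a.+1 b.+1) // (@gbin_nat _ q _ _ a b.+1); try lia.
rewrite (@gbin_nat _ q _ _ a.+1 b); try lia.
have e1 : (a.+1 + b.+1 = (a + b).+2)%N by rewrite addSn addnS.
have e2 : (a + b.+1 = (a + b).+1)%N by rewrite addnS.
have e3 : (a.+1 + b = (a + b).+1)%N by rewrite addSn.
have e4 : q ^+ (a + b).+2 = q ^+ a.+1 * q ^+ b.+1 by rewrite -exprD addSn addnS.
rewrite e1 e2 e3 !gfacS e4 -exprnP.
have h1 := gfac_neq0 q a hq. have h2 := gfac_neq0 q b hq. have h3 := gfac_neq0 q (a + b) hq.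
have h4 := hq.2 a.+1 (ltn0Sn a). have h5 := hq.2 b.+1 (ltn0Sn b).
have h6 := hq.2 (a + b).+1 (ltn0Sn _).
field.
by rewrite ?h1 ?h2 ?h3 ?h4 ?h5 ?h6.
Qed.

Lemma pascal_b {F : fieldType} (q : F) (n m : int) : qgood q -> (n != 0) || (m != 0) ->
  gbin q n m = q ^ (n - m) * gbin q (n - 1) (m - 1) + gbin q (n - 1) m.
Proof.
move=> hq nz.
case: (ltP m 0) => hm0.
  by rewrite !gbin_out ?mulr0 ?addr0 //; lia.
case: (ltP n m) => hnm.
  by rewrite !gbin_out ?mulr0 ?addr0 //; lia.
have [a [b [ea eb]]] := @int_split m n hm0 hnm; subst m n.
have -> : (a + b)%N%:Z - a%:Z = b%:Z by rewrite PoszD addrC addKr.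
case: a nz hm0 hnm => [|a] nz hm0 hnm.
  rewrite (@gbin_out _ q _ (-1)) //.
  case: b nz hm0 hnm => [|b] nz hm0 hnm; first by case/orP: nz.
  rewrite (@gbin_nat _ q _ _ 0 b.+1) // (@gbin_nat _ q _ _ 0 b); try lia.
  by rewrite !add0n gfac0 mulr0 !mul1r add0r !divff // ?gfac_neq0.
case: b nz hm0 hnm => [|b] nz hm0 hnm.
  rewrite (@gbin_nat _ q _ _ a.+1 0) // (@gbin_nat _ q _ _ a 0); try lia.
  rewrite (@gbin_out _ q _ (a.+1%:Z)); last lia.
  by rewrite !addn0 gfac0 !mulr1 expr0z mul1r addr0 !divff // ?gfac_neq0.
rewrite (@gbin_nat _ q _ _ a.+1 b.+1) // (@gbin_nat _ q _ _ a b.+1); try lia.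
rewrite (@gbin_nat _ q _ _ a.+1 b); try lia.
have e1 : (a.+1 + b.+1 = (a + b).+2)%N by rewrite addSn addnS.
have e2 : (a + b.+1 = (a + b).+1)%N by rewrite addnS.
have e3 : (a.+1 + b = (a + b).+1)%N by rewrite addSn.
have e4 : q ^+ (a + b).+2 = q ^+ a.+1 * q ^+ b.+1 by rewrite -exprD addSn addnS.
rewrite e1 e2 e3 !gfacS e4 -exprnP.
have h1 := gfac_neq0 q a hq. have h2 := gfac_neq0 q b hq. have h3 := gfac_neq0 q (a + b) hq.
have h4 := hq.2 a.+1 (ltn0Sn a). have h5 := hq.2 b.+1 (ltn0Sn b).
have h6 := hq.2 (a + b).+1 (ltn0Sn _).
field.
by rewrite ?h1 ?h2 ?h3 ?h4 ?h5 ?h6.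
Qed.

Definition ZS {F : fieldType} (B : nat) (f : int -> F) : F :=
  f 0 + \sum_(n < B) (f (n.+1)%:Z + f (- (n.+1)%:Z)).

Lemma ZS_S {F : fieldType} B (f : int -> F) :
  ZS B.+1 f = ZS B f + (f (B.+1)%:Z + f (- (B.+1)%:Z)).
Proof. by rewrite /ZS big_ord_recr /= addrA. Qed.

Lemma ZS_eq {F : fieldType} B (f g : int -> F) : (forall j, f j = g j) -> ZS B f = ZS B g.
Proof. move=> h; rewrite /ZS h; congr (_ + _); apply: eq_bigr => i _; by rewrite !h. Qed.

Lemma ZS_add {F : fieldType} B (f g : int -> F) : ZS B (fun j => f j + g j) = ZS B f + ZS B g.
Proof.
elim: B => [|B IH]; first by rewrite /ZS !big_ord0 !addr0.
rewrite !ZS_S IH; ring.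
Qed.

Lemma ZS_scale {F : fieldType} B (c : F) (f : int -> F) : ZS B (fun j => c * f j) = c * ZS B f.
Proof.
elim: B => [|B IH]; first by rewrite /ZS !big_ord0 !addr0.
rewrite !ZS_S IH; ring.
Qed.

Lemma ZS_ext {F : fieldType} B B' (f : int -> F) :
  (forall n : nat, (B < n)%N -> f n%:Z = 0 /\ f (- n%:Z) = 0) -> (B <= B')%N -> ZS B' f = ZS B f.
Proof.
move=> hf; elim: B' => [|B' IH] hB.
  by have -> : B = 0%N by lia.
case: (ltnP B B'.+1) => h.
  rewrite ZS_S IH; last lia.
  have [h1 h2] := hf B'.+1 h.
  by rewrite h1 h2 !addr0.
by have -> : B = B'.+1 by lia.
Qed.

Lemma ZS_neg {F : fieldType} B (f : int -> F) : ZS B (fun j => f (- j)) = ZS B f.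
Proof.
elim: B => [|B IH]; first by rewrite /ZS !big_ord0 oppr0.
by rewrite !ZS_S IH opprK [f (- _) + _]addrC.
Qed.

Lemma ZS_anti1 {F : fieldType} B (f : int -> F) :
  (forall j, f (-1 - j) = - f j) -> ZS B f = f B%:Z.
Proof.
move=> h; elim: B => [|B IH]; first by rewrite /ZS big_ord0 addr0.
rewrite ZS_S IH.
have -> : - (B.+1)%:Z = -1 - B%:Z by lia.
rewrite h; ring.
Qed.

Lemma ZS_anti2 {F : fieldType} B (f : int -> F) :
  (forall j, f (1 - j) = - f j) -> ZS B f = f (- B%:Z).
Proof.
move=> h; elim: B => [|B IH]; first by rewrite /ZS big_ord0 addr0 oppr0.
rewrite ZS_S IH.
have -> : (B.+1)%:Z = 1 - (- B%:Z) by lia.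
rewrite h; ring.
Qed.

Lemma ZS_delta {F : fieldType} B (f : int -> F) :
  (forall j, j != 0 -> f j = 0) -> ZS B f = f 0.
Proof.
move=> h; elim: B => [|B IH]; first by rewrite /ZS big_ord0 addr0.
rewrite ZS_S IH (h (B.+1)%:Z) ?(h (- (B.+1)%:Z)) ?addr0 //; lia.
Qed.

Lemma ZS_conv {F : fieldType} B (f : int -> F) :
  \sum_(k < (2 * B).+1) f (k%:Z - B%:Z) = ZS B f.
Proof.
elim: B f => [|B IH] f.
  by rewrite big_ord_recr big_ord0 /ZS big_ord0 /= !add0r !addr0.
have -> : (2 * B.+1).+1 = ((2 * B).+1).+2 by lia.
rewrite big_ord_recl big_ord_recr /=.
rewrite (eq_bigr (fun i : 'I_(2 * B).+1 => f (i%:Z - B%:Z))); last first.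
  by move=> i _; congr f; rewrite /bump /=; lia.
rewrite IH ZS_S.
have -> : (0%:Z - (B.+1)%:Z) = - (B.+1)%:Z by lia.
have -> : ((2 * B).+2%:Z - (B.+1)%:Z) = (B.+1)%:Z by lia.
ring.
Qed.

Lemma gbinE {F : fieldType} (q : F) x y x' y' : x = x' -> y = y' -> gbin q x y = gbin q x' y'.
Proof. by move=> -> ->. Qed.

Lemma pa {F : fieldType} (q : F) (n m n1 m1 : int) : qgood q -> n1 = n - 1 -> m1 = m - 1 ->
  (n != 0) || (m != 0) -> gbin q n m = gbin q n1 m1 + q ^ m * gbin q n1 m.
Proof. by move=> hq -> ->; apply: pascal_a. Qed.

Lemma pb {F : fieldType} (q : F) (n m n1 m1 : int) : qgood q -> n1 = n - 1 -> m1 = m - 1 ->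
  (n != 0) || (m != 0) -> gbin q n m = q ^ (n - m) * gbin q n1 m1 + gbin q n1 m.
Proof. by move=> hq -> ->; apply: pascal_b. Qed.

Lemma qD {F : fieldType} (q : F) (a b : int) : qgood q -> q ^ (a + b) = q ^ a * q ^ b.
Proof. by move=> hq; rewrite expfzDr // hq.1. Qed.

Lemma qN {F : fieldType} (q : F) (a : int) : q ^ (- a) = (q ^ a)^-1.
Proof. by rewrite invr_expz. Qed.

Lemma sg_N {F : fieldType} (j : int) : (-1) ^ (- j) = (-1) ^ j :> F.
Proof. by rewrite -invr_expz expfV invrN1. Qed.

Lemma sg_S {F : fieldType} (j : int) : (-1) ^ (1 + j) = - (-1) ^ j :> F.
Proof. by rewrite expfzDr ?expr1z ?mulN1r // oppr_eq0 oner_eq0. Qed.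

Lemma sg_m1 {F : fieldType} (j : int) : (-1) ^ (-1 - j) = - (-1) ^ j :> F.
Proof. by rewrite -opprD sg_N sg_S. Qed.

Lemma sg_1m {F : fieldType} (j : int) : (-1) ^ (1 - j) = - (-1) ^ j :> F.
Proof. by rewrite sg_S sg_N. Qed.

Lemma qnz {F : fieldType} (q : F) (x : int) : qgood q -> q ^ x != 0.
Proof. by move=> hq; rewrite expfz_neq0 // hq.1. Qed.

Lemma qn0 {F : fieldType} (q : F) : qgood q -> q != 0.
Proof. by case. Qed.

Ltac nzq hq := rewrite ?(qnz _ _ hq) ?(qn0 _ hq).

Definition e1 (j : int) : int := ((j * (5 * j + 3)) %/ 2)%Z.
Definition e0 (j : int) : int := ((j * (5 * j + 1)) %/ 2)%Z.
Definition eh (j : int) : int := ((j * (5 * j - 1)) %/ 2)%Z.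

Lemma divE (x y k : int) : x = k * 2 + y -> (x %/ 2)%Z = k + (y %/ 2)%Z.
Proof. by move=> ->; rewrite divzMDl. Qed.

Lemma e1E j : e1 j = j + e0 j.
Proof. by rewrite /e1 /e0 (@divE _ (j * (5 * j + 1)) j) //; ring. Qed.

Lemma e0E j : e0 j = j + eh j.
Proof. by rewrite /e0 /eh (@divE _ (j * (5 * j - 1)) j) //; ring. Qed.

Lemma e1m j : e1 (-1 - j) = (2 * j + 1) + e1 j.
Proof. by rewrite /e1 (@divE _ (j * (5 * j + 3)) (2 * j + 1)) //; ring. Qed.

Lemma eh1m j : eh (1 - j) = (2 - 4 * j) + eh j.
Proof. by rewrite /eh (@divE _ (j * (5 * j - 1)) (2 - 4 * j)) //; ring. Qed.

Lemma e0N j : e0 (- j) = eh j.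
Proof. by rewrite /e0 /eh; congr (_ %/ _)%Z; ring. Qed.

Definition T1 {F : fieldType} (q : F) (A M j : int) : F :=
  (-1) ^ j * q ^ (e1 j) * gbin q (A + j) (M - j - 1) * gbin q (A - j) (M + j).
Definition T0 {F : fieldType} (q : F) (A M j : int) : F :=
  (-1) ^ j * q ^ (e0 j) * gbin q (A + j) (M - j) * gbin q (A - j) (M + j).
Definition Th {F : fieldType} (q : F) (A M j : int) : F :=
  (-1) ^ j * q ^ (eh j) * gbin q (A - 1 + j) (M - 1 - j) * gbin q (A - j) (M - 1 + j).
Definition U1 {F : fieldType} (q : F) (A M j : int) : F :=
  (-1) ^ j * q ^ (e1 j) * q ^ (M + 1 + j) * gbin q (A + 1 + j) (M - j) * gbin q (A - j) (M + 1 + j).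

Lemma ID1 {F : fieldType} (q : F) (A M j : int) : qgood q -> 0 <= M -> M <= A ->
  T1 q (A + 1) (M + 1) j = T1 q A M j + q ^ M * T0 q A M j + U1 q A M j.
Proof.
move=> hq h0 h1; rewrite /T1 /T0 /U1.
rewrite (@gbinE _ q (A + 1 + j) (M + 1 - j - 1) (A + 1 + j) (M - j)); try lia.
rewrite (@pa _ q (A + 1 + j) (M - j) (A + j) (M - j - 1)) //; try lia.
rewrite (@pa _ q (A + 1 - j) (M + 1 + j) (A - j) (M + j)) //; try lia.
rewrite e1E !qD // !qN expr1z.
have hj : q ^ j != 0 by rewrite expfz_neq0 // hq.1.
field; by nzq hq.
Qed.

Lemma ANTI1 {F : fieldType} (q : F) (A M j : int) : qgood q ->
  U1 q A M (-1 - j) = - U1 q A M j.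
Proof.
move=> hq; rewrite /U1.
rewrite (@gbinE _ q (A + 1 + (-1 - j)) (M - (-1 - j)) (A - j) (M + 1 + j)); try lia.
rewrite (@gbinE _ q (A - (-1 - j)) (M + 1 + (-1 - j)) (A + 1 + j) (M - j)); try lia.
have -> : M + 1 + (-1 - j) = M + - j by ring.
rewrite sg_m1 e1m !qD // !qN expr1z.
have hj : q ^ j != 0 by rewrite expfz_neq0 // hq.1.
have -> : (2 * j) = j + j by ring.
rewrite !qD //.
field; by nzq hq.
Qed.

Definition V {F : fieldType} (q : F) (A M j : int) : F :=
  (-1) ^ j * q ^ (eh j) * q ^ (A + 1 - M - 2 * j) * gbin q (A - 1 + j) (M - j) * gbin q (A - j) (M - 1 + j).

Lemma ANTI2 {F : fieldType} (q : F) (A M j : int) : qgood q ->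
  V q A M (1 - j) = - V q A M j.
Proof.
move=> hq; rewrite /V.
rewrite (@gbinE _ q (A - 1 + (1 - j)) (M - (1 - j)) (A - j) (M - 1 + j)); try lia.
rewrite (@gbinE _ q (A - (1 - j)) (M - 1 + (1 - j)) (A - 1 + j) (M - j)); try lia.
have -> : A + 1 - M - 2 * (1 - j) = (A + 1 - M - 2 * j) + - (2 - 4 * j) by ring.
rewrite sg_1m eh1m !qD // !qN !qD // !qN.
have E2 : q ^ (2 * j) = q ^ j * q ^ j by rewrite -qD //; congr (_ ^ _); ring.
have E4 : q ^ (4 * j) = q ^ j * q ^ j * q ^ j * q ^ j by rewrite -!qD //; congr (_ ^ _); ring.
rewrite E2 E4 expr1z.
field; by nzq hq.
Qed.

Lemma pb_mul {F : fieldType} (q : F) (n m n1 m1 : int) (Z : F) : qgood q -> n1 = n - 1 -> m1 = m - 1 ->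
  ((n == 0) && (m == 0) -> Z = 0) ->
  gbin q n m * Z = (q ^ (n - m) * gbin q n1 m1 + gbin q n1 m) * Z.
Proof.
move=> hq e1 e2 hz; case: (boolP ((n == 0) && (m == 0))) => h.
  by rewrite (hz h) !mulr0.
by rewrite (@pb _ q n m n1 m1) //; move: h; rewrite negb_and.
Qed.

Lemma ID3 {F : fieldType} (q : F) (A M j : int) : qgood q -> 0 <= M -> M <= A ->
  Th q (A + 1) (M + 1) j = q ^ (2 * (A - M) + 1) * Th q A M j + T0 q A M (- j) + V q A M j.
Proof.
move=> hq h0 h1; rewrite /Th /T0 /V.
rewrite (@gbinE _ q (A + 1 - 1 + j) (M + 1 - 1 - j) (A + j) (M - j)); try lia.
rewrite (@gbinE _ q (A + 1 - j) (M + 1 - 1 + j) (A + 1 - j) (M + j)); try lia.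
rewrite (@pb _ q (A + 1 - j) (M + j) (A - j) (M - 1 + j)) //; try lia.
rewrite (@gbinE _ q (A + - j) (M - - j) (A - j) (M + j)); try lia.
rewrite (@gbinE _ q (A - - j) (M + - j) (A + j) (M - j)); try lia.
rewrite sg_N e0N.
rewrite mulrDr mulrDr.
rewrite (mulrC (q ^ (A + 1 - j - (M + j)))).
rewrite -(mulrA _ (gbin q (A + j) (M - j))) (mulrA (gbin q (A + j) (M - j))).
rewrite (@pb_mul _ q (A + j) (M - j) (A - 1 + j) (M - 1 - j)) //; try lia.
  have -> : A + 1 - j - (M + j) = A + 1 - M - 2 * j by ring.
  have -> : A + j - (M - j) = A - M + 2 * j by ring.
  have -> : 2 * A + 2 * - M + 1 = (A + 1 - M - 2 * j) + (A - M + 2 * j) by ring.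
  rewrite (qD _ (A + 1 - M - 2 * j)) //.
  ring.
move=> /andP [/eqP ha /eqP hm]; rewrite gbin_out //; lia.
Qed.

Lemma ID4 {F : fieldType} (q : F) (A M j : int) : qgood q -> 0 <= M -> 0 <= A ->
  T0 q (A + 2) (M + 1) j = T0 q (A + 1) M j + q ^ (M + 1) * (Th q (A + 2) (M + 2) j + T1 q (A + 1) (M + 1) j).
Proof.
move=> hq h0 h1; rewrite /T0 /Th /T1.
rewrite (@pa _ q (A + 2 + j) (M + 1 - j) (A + 1 + j) (M - j)) //; try lia.
rewrite (@pa _ q (A + 2 - j) (M + 1 + j) (A + 1 - j) (M + j)) //; try lia.
rewrite (@gbinE _ q (A + 2 - 1 + j) (M + 2 - 1 - j) (A + 1 + j) (M + 1 - j)); try lia.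
rewrite (@gbinE _ q (A + 2 - j) (M + 2 - 1 + j) (A + 2 - j) (M + 1 + j)); try lia.
rewrite (@pa _ q (A + 2 - j) (M + 1 + j) (A + 1 - j) (M + j)) //; try lia.
rewrite (@gbinE _ q (A + 1 + j) (M + 1 - j - 1) (A + 1 + j) (M - j)); try lia.
rewrite e1E e0E !qD // !qN expr1z.
have hj : q ^ j != 0 by rewrite expfz_neq0 // hq.1.
field; by nzq hq.
Qed.

Definition rF {F : fieldType} (q : F) (L M n : nat) : F :=
  q ^+ (n * n.+1) * gbin q ((2 * L + M)%:Z - n%:Z) (2 * L + 1)%:Z * gbin q L%:Z n%:Z.
Definition rG {F : fieldType} (q : F) (L M n : nat) : F :=
  q ^+ (n * n) * gbin q ((2 * L + M)%:Z - n%:Z) (2 * L)%:Z * gbin q L%:Z n%:Z.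
Definition rH {F : fieldType} (q : F) (L M n : nat) : F :=
  q ^+ (n * n) * gbin q ((2 * L + M)%:Z - n%:Z) (2 * L + 1)%:Z * gbin q L%:Z n%:Z.

Lemma r1 {F : fieldType} (q : F) L M n : qgood q ->
  rF q L M.+1 n = rF q L M n + q ^+ M * rG q L M n.
Proof.
move=> hq; rewrite /rF /rG.
rewrite (@pb _ q ((2 * L + M.+1)%:Z - n%:Z) (2 * L + 1)%:Z ((2 * L + M)%:Z - n%:Z) (2 * L)%:Z) //; try lia.
have -> : (2 * L + M.+1)%:Z - n%:Z - (2 * L + 1)%:Z = M%:Z + - n%:Z by lia.
rewrite qD // qN -!exprnP.
have -> : (n * n.+1 = n * n + n)%N by ring.
rewrite exprD.
have hn : q ^+ n != 0 by rewrite expf_neq0 // (qn0 _ hq).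
field; by rewrite ?hn.
Qed.

Lemma r3 {F : fieldType} (q : F) L M n : qgood q ->
  rH q L M.+1 n = rG q L M n + q ^+ (2 * L + 1) * rH q L M n.
Proof.
move=> hq; rewrite /rH /rG.
rewrite (@pa _ q ((2 * L + M.+1)%:Z - n%:Z) (2 * L + 1)%:Z ((2 * L + M)%:Z - n%:Z) (2 * L)%:Z) //; try lia.
rewrite -exprnP; ring.
Qed.

Definition rw {F : fieldType} (q : F) (L M n : nat) : F :=
  q ^ ((n * n)%N%:Z - n%:Z) * gbin q ((2 * L + M.+2)%:Z - n%:Z) (2 * L + 1)%:Z * gbin q L%:Z (n%:Z - 1).

Lemma r4 {F : fieldType} (q : F) L M n : qgood q ->
  rG q L.+1 M.+1 n = rG q L.+1 M n + q ^+ M.+1 * (rH q L M.+2 n + rw q L M n).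
Proof.
move=> hq; rewrite /rG /rH /rw.
rewrite (@pb _ q ((2 * L.+1 + M.+1)%:Z - n%:Z) (2 * L.+1)%:Z ((2 * L + M.+2)%:Z - n%:Z) (2 * L + 1)%:Z) //; try lia.
rewrite (@gbinE _ q ((2 * L + M.+2)%:Z - n%:Z) (2 * L.+1)%:Z ((2 * L.+1 + M)%:Z - n%:Z) (2 * L.+1)%:Z); try lia.
rewrite (@pa _ q L.+1%:Z n%:Z L%:Z (n%:Z - 1)) //; try lia.
have -> : (2 * L.+1 + M.+1)%:Z - n%:Z - (2 * L.+1)%:Z = M%:Z + 1 + - n%:Z by lia.
rewrite !qD // !qN -!exprnP !exprS expr0.
have hn : q ^+ n != 0 by rewrite expf_neq0 // (qn0 _ hq).
field; by rewrite ?hn.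
Qed.

Definition RF {F : fieldType} (q : F) L M := \sum_(n < L.+1) rF q L M n.
Definition RG {F : fieldType} (q : F) L M := \sum_(n < L.+1) rG q L M n.
Definition RH {F : fieldType} (q : F) L M := \sum_(n < L.+1) rH q L M n.

Lemma sum_ext {F : fieldType} (f : nat -> F) N K :
  (forall n, (N <= n)%N -> f n = 0) -> (N <= K)%N -> \sum_(n < K) f n = \sum_(n < N) f n.
Proof.
move=> hf; elim: K => [|K IH] hK; first by have -> : N = 0%N by lia.
case: (ltnP N K.+1) => h.
  by rewrite big_ord_recr /= IH ?hf ?addr0 //; lia.
by have -> : N = K.+1 by lia.
Qed.

Lemma RF_S {F : fieldType} (q : F) L M : qgood q -> RF q L M.+1 = RF q L M + q ^+ M * RG q L M.
Proof.
move=> hq; rewrite /RF /RG mulr_sumr -big_split /=.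
by apply: eq_bigr => i _; rewrite r1.
Qed.

Lemma RH_S {F : fieldType} (q : F) L M : qgood q -> RH q L M.+1 = RG q L M + q ^+ (2 * L + 1) * RH q L M.
Proof.
move=> hq; rewrite /RH /RG mulr_sumr -big_split /=.
by apply: eq_bigr => i _; rewrite r3.
Qed.

Lemma RG_S {F : fieldType} (q : F) L M : qgood q ->
  RG q L.+1 M.+1 = RG q L.+1 M + q ^+ M.+1 * (RH q L M.+2 + RF q L M.+1).
Proof.
move=> hq.
have eH : \sum_(n < L.+2) rH q L M.+2 n = RH q L M.+2.
  rewrite /RH big_ord_recr /= /rH (@gbin_out _ q L%:Z (L.+1)%:Z); last lia.
  by rewrite mulr0 addr0.
have eW : \sum_(n < L.+2) rw q L M n = RF q L M.+1.
  rewrite /RF big_ord_recl /= /rw (@gbin_out _ q L%:Z (0%:Z - 1)); last lia.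
  rewrite mulr0 add0r; apply: eq_bigr => i _; rewrite /rF /bump /=.
  rewrite (@gbinE _ q ((2 * L + M.+2)%:Z - (1 + i)%N%:Z) _ ((2 * L + M.+1)%:Z - i%:Z) (2 * L + 1)%:Z); try lia.
  rewrite (@gbinE _ q L%:Z ((1 + i)%N%:Z - 1) L%:Z i%:Z); try lia.
  have -> : ((1 + i) * (1 + i))%N%:Z - (1 + i)%N%:Z = (i * i.+1)%N%:Z by lia.
  by [].
rewrite -eH -eW -big_split /= mulr_sumr /RG -big_split /=.
by apply: eq_bigr => i _; rewrite r4.
Qed.

Lemma gbin_x0 {F : fieldType} (q : F) (x : int) : qgood q -> 0 <= x -> gbin q x 0 = 1.
Proof.
move=> hq hx; rewrite (@gbin_nat _ q x 0 0 `|x|%N) ?add0n; try lia.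
by rewrite gfac0 mul1r divff // gfac_neq0.
Qed.

Lemma gbin_xx {F : fieldType} (q : F) (x : int) : qgood q -> 0 <= x -> gbin q x x = 1.
Proof.
move=> hq hx; rewrite (@gbin_nat _ q x x `|x|%N 0) ?addn0; try lia.
by rewrite gfac0 mulr1 divff // gfac_neq0.
Qed.

Lemma RF_0 {F : fieldType} (q : F) L : RF q L 0 = 0.
Proof.
rewrite /RF big1 // => i _; rewrite /rF (@gbin_out _ q _ (2 * L + 1)%:Z); last lia.
by rewrite mulr0 mul0r.
Qed.

Lemma RH_0 {F : fieldType} (q : F) L : RH q L 0 = 0.
Proof.
rewrite /RH big1 // => i _; rewrite /rH (@gbin_out _ q _ (2 * L + 1)%:Z); last lia.
by rewrite mulr0 mul0r.
Qed.

Lemma RG_0 {F : fieldType} (q : F) L : qgood q -> RG q L 0 = 1.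
Proof.
move=> hq; rewrite /RG big_ord_recl big1 ?addr0.
  rewrite /rG /= (@gbin_x0 _ q L%:Z) //.
  rewrite (@gbinE _ q _ (2 * L)%:Z (2 * L)%:Z (2 * L)%:Z); try lia.
  by rewrite gbin_xx // expr0 !mulr1.
move=> i _; rewrite /rG (@gbin_out _ q _ (2 * L)%:Z); last first.
  have -> : (lift ord0 i : nat) = i.+1 by rewrite lift0.
  lia.
by rewrite mulr0 mul0r.
Qed.

Lemma RG_0M {F : fieldType} (q : F) M : qgood q -> RG q 0 M = 1.
Proof.
move=> hq; rewrite /RG big_ord_recl big_ord0 addr0 /rG /=.
rewrite (@gbin_x0 _ q 0%:Z) //.
rewrite (@gbinE _ q _ _ M%:Z 0); try lia.
by rewrite gbin_x0 // expr0 !mulr1.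
Qed.

Definition lF {F : fieldType} (q : F) (L M : nat) := ZS M (T1 q (L%:Z + M%:Z) M%:Z).
Definition lG {F : fieldType} (q : F) (L M : nat) := ZS M (T0 q (L%:Z + M%:Z) M%:Z).
Definition lH {F : fieldType} (q : F) (L M : nat) := ZS M (Th q (L%:Z + M%:Z) M%:Z).

Lemma supp {F : fieldType} (f : int -> F) (K : nat) :
  (forall j : int, K%:Z < j -> f j = 0) -> (forall j, j < - K%:Z -> f j = 0) ->
  forall n : nat, (K < n)%N -> f n%:Z = 0 /\ f (- n%:Z) = 0.
Proof. move=> h1 h2 n hn; split; [apply: h1 | apply: h2]; lia. Qed.

Lemma zl {F : fieldType} (a b c : F) : b = 0 -> a * b * c = 0.
Proof. by move=> ->; rewrite mulr0 mul0r. Qed.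
Lemma zr {F : fieldType} (a b : F) : b = 0 -> a * b = 0.
Proof. by move=> ->; rewrite mulr0. Qed.

Lemma sT1 {F : fieldType} (q : F) A (M : nat) K : (M <= K)%N ->
  forall n : nat, (K < n)%N -> T1 q A M n%:Z = 0 /\ T1 q A M (- n%:Z) = 0.
Proof.
move=> hK; apply: supp => j hj; rewrite /T1.
  by apply: zl; rewrite gbin_out //; lia.
by apply: zr; rewrite gbin_out //; lia.
Qed.

Lemma sT0 {F : fieldType} (q : F) A (M : nat) K : (M <= K)%N ->
  forall n : nat, (K < n)%N -> T0 q A M n%:Z = 0 /\ T0 q A M (- n%:Z) = 0.
Proof.
move=> hK; apply: supp => j hj; rewrite /T0.
  by apply: zl; rewrite gbin_out //; lia.
by apply: zr; rewrite gbin_out //; lia.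
Qed.

Lemma sTh {F : fieldType} (q : F) A (M : nat) K : (M <= K)%N ->
  forall n : nat, (K < n)%N -> Th q A M n%:Z = 0 /\ Th q A M (- n%:Z) = 0.
Proof.
move=> hK; apply: supp => j hj; rewrite /Th.
  by apply: zl; rewrite gbin_out //; lia.
by apply: zr; rewrite gbin_out //; lia.
Qed.

Lemma lF_S {F : fieldType} (q : F) L M : qgood q -> lF q L M.+1 = lF q L M + q ^+ M * lG q L M.
Proof.
move=> hq; rewrite /lF /lG.
rewrite -(@ZS_ext _ M.+1 M.+2); [|exact: sT1|lia].
have -> : (M.+1)%:Z = M%:Z + 1 by lia.
rewrite addrA.
rewrite (@ZS_eq _ M.+2 _ (fun j => (T1 q (L%:Z + M%:Z) M%:Z j + q ^ M%:Z * T0 q (L%:Z + M%:Z) M%:Z j)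
   + U1 q (L%:Z + M%:Z) M%:Z j)); last by move=> j; apply: ID1 => //; lia.
rewrite !ZS_add ZS_scale (@ZS_anti1 _ M.+2 (U1 q _ _)); last by move=> j; apply: ANTI1.
rewrite /U1 (@gbin_out _ q _ (M%:Z - (M.+2)%:Z)); last lia.
rewrite mulr0 mul0r addr0.
rewrite (@ZS_ext _ M M.+2 (T1 _ _ _)); [|exact: sT1|lia].
rewrite (@ZS_ext _ M M.+2 (T0 _ _ _)); [|exact: sT0|lia].
by [].
Qed.

Lemma lH_S {F : fieldType} (q : F) L M : qgood q -> lH q L M.+1 = lG q L M + q ^+ (2 * L + 1) * lH q L M.
Proof.
move=> hq; rewrite /lF /lG /lH.
rewrite -(@ZS_ext _ M.+1 M.+2); [|exact: sTh|lia].
have -> : (M.+1)%:Z = M%:Z + 1 by lia.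
rewrite addrA.
rewrite (@ZS_eq _ M.+2 _ (fun j => (q ^ (2 * (L%:Z + M%:Z - M%:Z) + 1) * Th q (L%:Z + M%:Z) M%:Z j
   + T0 q (L%:Z + M%:Z) M%:Z (- j)) + V q (L%:Z + M%:Z) M%:Z j)); last by move=> j; apply: ID3 => //; lia.
rewrite !ZS_add ZS_scale (@ZS_anti2 _ M.+2 (V q _ _)); last by move=> j; apply: ANTI2.
rewrite /V (@gbin_out _ q _ (M%:Z - 1 + - (M.+2)%:Z)); last lia.
rewrite mulr0 addr0.
rewrite (@ZS_neg _ M.+2 (T0 _ _ _)).
rewrite (@ZS_ext _ M M.+2 (Th _ _ _)); [|exact: sTh|lia].
rewrite (@ZS_ext _ M M.+2 (T0 _ _ _)); [|exact: sT0|lia].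
have -> : 2 * (L%:Z + M%:Z - M%:Z) + 1 = (2 * L + 1)%N%:Z by lia.
by rewrite addrC.
Qed.

Lemma lG_S {F : fieldType} (q : F) L M : qgood q ->
  lG q L.+1 M.+1 = lG q L.+1 M + q ^+ M.+1 * (lH q L M.+2 + lF q L M.+1).
Proof.
move=> hq; rewrite /lF /lG /lH.
rewrite -(@ZS_ext _ M.+1 M.+2 (T0 _ _ _)); [|exact: sT0|lia].
rewrite -(@ZS_ext _ M M.+2 (T0 _ _ _)); [|exact: sT0|lia].
rewrite -(@ZS_ext _ M.+1 M.+2 (T1 _ _ _)); [|exact: sT1|lia].
have -> : (L.+1)%:Z + (M.+1)%:Z = (L%:Z + M%:Z) + 2 by lia.
have -> : (L.+1)%:Z + M%:Z = (L%:Z + M%:Z) + 1 by lia.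
have -> : L%:Z + (M.+2)%:Z = (L%:Z + M%:Z) + 2 by lia.
have -> : L%:Z + (M.+1)%:Z = (L%:Z + M%:Z) + 1 by lia.
have -> : (M.+2)%:Z = M%:Z + 2 by lia.
have -> : (M.+1)%:Z = M%:Z + 1 by lia.
rewrite (@ZS_eq _ M.+2 _ (fun j => T0 q (L%:Z + M%:Z + 1) M%:Z j + q ^ (M%:Z + 1) *
   (Th q (L%:Z + M%:Z + 2) (M%:Z + 2) j + T1 q (L%:Z + M%:Z + 1) (M%:Z + 1) j))); last by move=> j; apply: ID4 => //; lia.
rewrite ZS_add ZS_scale ZS_add.
congr (_ + _ * _).
by rewrite exprnP; congr (_ ^ _); lia.
Qed.

Lemma lF_0 {F : fieldType} (q : F) L : lF q L 0 = 0.
Proof. by rewrite /lF /ZS big_ord0 addr0 /T1; apply: zl; rewrite gbin_out //; lia. Qed.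

Lemma lH_0 {F : fieldType} (q : F) L : lH q L 0 = 0.
Proof. by rewrite /lH /ZS big_ord0 addr0 /Th; apply: zl; rewrite gbin_out //; lia. Qed.

Lemma lG_0 {F : fieldType} (q : F) L : qgood q -> lG q L 0 = 1.
Proof.
move=> hq; rewrite /lG /ZS big_ord0 addr0 /T0 /e0.
rewrite (@gbinE _ q _ _ (L%:Z) 0); try lia.
by rewrite !gbin_x0 // mul0r div0z expr0z !mulr1.
Qed.

Lemma lG_0M {F : fieldType} (q : F) M : qgood q -> lG q 0 M = 1.
Proof.
move=> hq; rewrite /lG ZS_delta.
  rewrite /T0 /e0 (@gbinE _ q _ _ (M%:Z) (M%:Z)); try lia.
  by rewrite !gbin_xx // mul0r div0z expr0z !mulr1.
move=> j hj; rewrite /T0.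
case: (ltP 0 j) => h.
  by apply: zr; rewrite gbin_out //; lia.
by apply: zl; rewrite gbin_out //; lia.
Qed.

Lemma all_eq {F : fieldType} (q : F) : qgood q -> forall L M,
  lF q L M = RF q L M /\ lG q L M = RG q L M /\ lH q L M = RH q L M.
Proof.
move=> hq.
have levFH : forall L, (forall M, lG q L M = RG q L M) ->
    forall M, lF q L M = RF q L M /\ lH q L M = RH q L M.
  move=> L hG; elim=> [|M [IHF IHH]]; first by rewrite lF_0 RF_0 lH_0 RH_0.
  by rewrite lF_S // RF_S // lH_S // RH_S // IHF IHH hG.
have levG : forall L, (forall M, lF q L M = RF q L M /\ lH q L M = RH q L M) ->
    forall M, lG q L.+1 M = RG q L.+1 M.
  move=> L h; elim=> [|M IH]; first by rewrite lG_0 // RG_0.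
  rewrite lG_S // RG_S // IH; have [h1 _] := h M.+1; have [_ h2] := h M.+2.
  by rewrite h1 h2.
have G : forall L M, lG q L M = RG q L M.
  elim=> [|L IH] M; first by rewrite lG_0M // RG_0M.
  by apply: levG; apply: levFH.
move=> L M; have [h1 h2] := levFH L (G L) M.
by split; [|split].
Qed.

Lemma qfacE : qfac = gfac qF.
Proof. reflexivity. Qed.

Lemma qbinomE : qbinom = gbin qF.
Proof. reflexivity. Qed.

Theorem lemma3p2 (L M : nat) :
  \sum_(k < (2 * (L + M + 1)).+1)
     (let j : int := k%:Z - (L + M + 1)%:Z in
      (-1) ^ j * qF ^ ((j * (5 * j + 3)) %/ 2)%Z
        * qbinom (L%:Z + M%:Z + j) (M%:Z - j - 1)
        * qbinom (L%:Z + M%:Z - j) (M%:Z + j))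
  = \sum_(n < (L + M + 1).+1)
      qF ^+ (n * n.+1)
        * qbinom ((2 * L + M)%:Z - n%:Z) (2 * L + 1)%:Z
        * qbinom L%:Z n%:Z.
Proof.
have hq : qgood qF.
  by split; [exact: qF_neq0 | move=> k hk; exact: one_sub_qpow_neq0].
rewrite qbinomE.
transitivity (lF qF L M).
  rewrite /lF -(@ZS_ext _ M (L + M + 1) (T1 qF _ _)); [| exact: sT1 | lia].
  rewrite -ZS_conv; apply: eq_bigr => k _; rewrite /T1 /e1; reflexivity.
transitivity (RF qF L M); first exact: (all_eq qF hq L M).1.
rewrite /RF -(@sum_ext _ (rF qF L M) L.+1 (L + M + 1).+1); last lia.
  apply: eq_bigr => n _; rewrite /rF; reflexivity.
move=> n hn; rewrite /rF; apply: zr; rewrite gbin_out //; lia.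
Qed.
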